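(* Let $\mu$ be a fixed probability distribution on a measurable space $\mathcal{X}$, $\varepsilon\ge0$, $\delta\in[0,1]$. For $\lambda\in[0,1]$ define the sampler $\mathbf{Q}_\lambda$ on all distributions $P$ on $\mathcal{X}$ by $\mathbf{Q}_\lambda(A\mid P)=\lambda P(A)+(1-\lambda)\mu(A)$ for measurable $A\subseteq\mathcal{X}$. If $\mathbf{Q}_{\lambda_1}$ is $(\varepsilon,\delta)$-LDP for some $\lambda_1\in[0,1]$, then $\mathbf{Q}_{\lambda_2}$ is $(\varepsilon,\delta)$-LDP for every $\lambda_2\in[0,\lambda_1]$.
   Context: A sampler $\mathbf{Q}$ defined on a class of distributions is $(\varepsilon,\delta)$-LDP if $\mathbf{Q}(A\mid P)\le e^\varepsilon\mathbf{Q}(A\mid P')+\delta$ for every pair of inputs $P,P'$ in its domain and every measurable $A$. *)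

(* Defs.v *)
From mathcomp Require Import all_boot all_order all_algebra.
From mathcomp Require Import all_classical all_reals all_analysis.
Set Implicit Arguments. Unset Strict Implicit. Unset Printing Implicit Defensive.
Import Order.TTheory GRing.Theory Num.Theory.
Local Open Scope ring_scope.
Local Open Scope classical_set_scope.

Definition mix_sampler d (T : measurableType d) (R : realType)
  (mu : probability T R) (lam : R) (P : probability T R) (A : set T) : \bar R :=
  (lam%:E * P A + (1 - lam)%:E * mu A)%E.

Definition sampler_LDP d (T : measurableType d) (R : realType)
  (Q : probability T R -> set T -> \bar R) (eps delta : R) : Prop :=
  forall (P P' : probability T R) (A : set T), measurable A ->
    (Q P A <= (expR eps)%:E * Q P' A + delta%:E)%E.

(* Main.v *)
Require Import Defs.
From mathcomp Require Import all_boot all_order all_algebra.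
From mathcomp Require Import all_classical all_reals all_analysis.
From mathcomp Require Import ring lra.
Import Order.TTheory GRing.Theory Num.Theory.
Local Open Scope ring_scope.

Lemma real_step (R : realType) (l1 l2 m p p' E dl : R) :
  0 <= l2 -> l2 <= l1 -> 0 <= m -> 1 <= E -> 0 <= dl ->
  l1 * p + (1 - l1) * m <= E * (l1 * p' + (1 - l1) * m) + dl ->
  l2 * p + (1 - l2) * m <= E * (l2 * p' + (1 - l2) * m) + dl.
Proof.
move=> h2 h21 hm hE hd H.
have [l10|l1n0] := eqVneq l1 0.
  have l20 : l2 = 0 by apply/eqP; rewrite eq_le h2 andbT -l10.
  by move: H; rewrite l10 l20.
have l1p : 0 < l1 by rewrite lt_def l1n0 (le_trans h2 h21).
rewrite -(ler_pM2l l1p).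
have A1 : 0 <= l2 * (E * (l1 * p' + (1 - l1) * m) + dl - (l1 * p + (1 - l1) * m)).
  by apply: mulr_ge0 => //; rewrite subr_ge0.
have A2 : 0 <= (l1 - l2) * ((E - 1) * m).
  by apply: mulr_ge0; [rewrite subr_ge0 | apply: mulr_ge0 => //; rewrite subr_ge0].
have A3 : 0 <= (l1 - l2) * dl by apply: mulr_ge0 => //; rewrite subr_ge0.
rewrite -subr_ge0.
have -> : l1 * (E * (l2 * p' + (1 - l2) * m) + dl) - l1 * (l2 * p + (1 - l2) * m)
  = l2 * (E * (l1 * p' + (1 - l1) * m) + dl - (l1 * p + (1 - l1) * m))
    + (l1 - l2) * ((E - 1) * m) + (l1 - l2) * dl by ring.
by rewrite !addr_ge0.
Qed.

Theorem lemma1 (d : measure_display) (T : measurableType d) (R : realType)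
  (mu : probability T R) (eps delta lam1 : R) :
  0 <= eps -> 0 <= delta <= 1 -> 0 <= lam1 <= 1 ->
  sampler_LDP (mix_sampler mu lam1) eps delta ->
  forall lam2 : R, 0 <= lam2 <= lam1 ->
  sampler_LDP (mix_sampler mu lam2) eps delta.
Proof.
move=> he /andP[hd _] /andP[hl0 hl1] H lam2 /andP[h2 h21] P P' A mA.
have := H P P' A mA; rewrite /mix_sampler.
rewrite -(fineK (fin_num_measure P A mA)) -(fineK (fin_num_measure P' A mA)).
rewrite -(fineK (fin_num_measure mu A mA)).
rewrite -!EFinM -!EFinD !lee_fin => HH.
have hm : 0 <= fine (mu A) by rewrite fine_ge0.
have hE : 1 <= expR eps by rewrite -expR0 ler_expR.
exact: (@real_step R lam1 lam2 (fine (mu A)) (fine (P A)) (fine (P' A)) (expR eps) delta h2 h21 hm hE hd HH).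
Qed.
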